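(* Let $U_2$ be a unitary matrix with real entries having a unique (up to scalars) eigenvector $|\phi_0\rangle$ of eigenvalue $1$, chosen with real entries and norm $1$; let $|\mu\rangle$ be a unit vector with real entries, $U_1=I-2|\mu\rangle\langle\mu|$ and $U=U_2U_1$. Let $\varepsilon\in(0,1)$. For every $T\ge\max\{1,\mathsf{QHT}_\varepsilon(U_2,|\mu\rangle)\}$, the procedure $\mathbf{MainDetect}(U_2,|\mu\rangle,1/T,\varepsilon)$ accepts $|\phi_0\rangle$ with probability $1-O(\varepsilon)$ if $\langle\phi_0|\mu\rangle\ne0$, and accepts with probability $0$ otherwise.
   Context: Let $|\tilde\phi_0\rangle=|\phi_0\rangle-\langle\mu|\phi_0\rangle|\mu\rangle$, decomposed in eigenvectors of $U$ as $|\tilde\phi_0\rangle=\delta_0|w_0\rangle+\sum_j\delta_j(|w_j^+\rangle+|w_j^-\rangle)+\delta_{-1}|w_{-1}\rangle$ with real coefficients ($|w_0\rangle,|w_{-1}\rangle$ unit eigenvectors of eigenvalues $\pm1$; $|w_j^\pm\rangle$ unit eigenvectors of eigenvalues $e^{\pm i\alpha_j}$, $0<\alpha_j<\pi$, $|w_j^-\rangle=\overline{|w_j^+\rangle}$). $\mathit{QH}$ takes value $1/\alpha_j$ with probability $2\delta_j^2$, $1/\pi$ with probability $\delta_{-1}^2$, and $0$ otherwise; $\mathsf{QHT}_\varepsilon(U_2,|\mu\rangle)=\min\{y:\Pr[\mathit{QH}>y]\le\varepsilon\}$. $\mathbf{Estimate}$ is the standard phase estimation circuit for $U$ with precision $\Delta$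 (outputs an eigenphase within $\Delta$ with error probability at most $1/3$, outputs $0$ with certainty on $1$-eigenvectors, uses $O(1/\Delta)$ calls to $\text{c-}U$ and its inverse). $\mathbf{Detect}(U,\Delta,\varepsilon)$: apply $\Theta(\log(1/\varepsilon))$ times $\mathbf{Estimate}$ with precision $\Delta$ to the same input state; accept iff at least one estimated phase is nonzero. $\mathbf{MainDetect}(U_2,|\mu\rangle,\Delta,\varepsilon)$ on input $|\psi\rangle$: measure according to the decomposition $(|\mu\rangle,|\mu\rangle^\perp)$; if the outcome is $|\mu\rangle$, accept; otherwise apply $\mathbf{Detect}(U,\Delta,\varepsilon)$ to the resulting state. *)

(* Defs.v *)
From mathcomp Require Import all_boot all_order all_algebra complex.
From mathcomp Require Import all_classical all_reals all_analysis.
Set Implicit Arguments. Unset Strict Implicit. Unset Printing Implicit Defensive.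
Import Order.TTheory GRing.Theory Num.Theory.
Local Open Scope ring_scope.

Section QuantumDefs.
Variable R : realType.
Local Notation C := (R[i]).

Definition toC (x : R) : C := Complex x 0.
Definition cconj (z : C) : C := Complex (complex.Re z) (- complex.Im z).
Definition nsq (z : C) : R := complex.Re z ^+ 2 + complex.Im z ^+ 2.
Definition expi (t : R) : C := Complex (cos t) (sin t).

Definition vnorm2 n (v : 'cV[C]_n) : R := \sum_i nsq (v i 0).
Definition adj m n (A : 'M[C]_(m, n)) : 'M[C]_(n, m) := (map_mx cconj A)^T.
Definition rdot n (u v : 'cV[R]_n) : R := (u^T *m v) 0 0.

Definition U1 n (mu : 'cV[R]_n) : 'M[R]_n := 1%:M - 2 *: (mu *m mu^T).

Definition phitilde n (phi0 mu : 'cV[R]_n) : 'cV[R]_n :=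
  phi0 - rdot mu phi0 *: mu.

(* An orthonormal eigenbasis of U is given by the columns of a unitary W,
   with U W = W diag(e^{i theta_k}), theta_k in (-pi, pi].
   weight k = squared coefficient of |phi~_0> on the k-th eigenvector. *)
Definition weight n (W : 'M[C]_n) (phi0 mu : 'cV[R]_n) (k : 'I_n) : R :=
  nsq ((adj W *m map_mx toC (phitilde phi0 mu)) k 0).

(* Pr[QH > y]: QH = 1/alpha_j (i.e. 1/|theta_k|, theta_k = +-alpha_j) or
   1/pi (theta_k = pi) with the corresponding weights, and 0 otherwise. *)
Definition PrQH_gt n (W : 'M[C]_n) (theta : 'I_n -> R) (phi0 mu : 'cV[R]_n)
    (y : R) : R :=
  \sum_(k | theta k != 0) weight W phi0 mu k * (if y < `|theta k|^-1 then 1 else 0)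
  + (1 - \sum_(k | theta k != 0) weight W phi0 mu k) * (if y < 0 then 1 else 0).

Definition QHT n (W : 'M[C]_n) (theta : 'I_n -> R) (phi0 mu : 'cV[R]_n)
    (eps : R) : R :=
  inf [set y | PrQH_gt W theta phi0 mu y <= eps]%classic.

Definition cdist (a b : R) : R := Num.min `|a - b| (2 * pi - `|a - b|).

(* Abstract phase-estimation circuit with precision Delta: on an eigenvector
   of eigenphase t it produces outcome y (estimated phase out y) with
   amplitude amp t y. *)
Definition is_estimator (Y : finType) (out : Y -> R) (amp : R -> Y -> C)
    (Delta : R) : Prop :=
  (forall y, - pi < out y <= pi) /\
  (forall t, - pi < t <= pi ->
     \sum_y nsq (amp t y) = 1 /\
     \sum_(y | Delta <= cdist (out y) t) nsq (amp t y) <= 3^-1) /\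
  \sum_(y | out y == 0) nsq (amp 0 y) = 1.

(* Kraus operator of outcome y of Estimate: sum_k amp(theta_k, y) |w_k><w_k| *)
Definition kraus n (W : 'M[C]_n) (theta : 'I_n -> R) (Y : finType)
    (amp : R -> Y -> C) (y : Y) : 'M[C]_n :=
  W *m diag_mx (\row_k amp (theta k) y) *m adj W.

Definition run_seq n (W : 'M[C]_n) (theta : 'I_n -> R) (Y : finType)
    (amp : R -> Y -> C) (s : seq Y) (psi : 'cV[C]_n) : 'cV[C]_n :=
  foldl (fun v y => kraus W theta amp y *m v) psi s.

(* Acceptance probability of MainDetect(U_2, |mu>, Delta, eps) on input
   |phi_0>, where Detect uses m applications of Estimate:
   outcome |mu> (accept) or outcome mu-perp followed by m estimates,
   accepting iff at least one estimated phase is nonzero. *)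
Definition mainDetect_accept n (W : 'M[C]_n) (theta : 'I_n -> R)
    (Y : finType) (out : Y -> R) (amp : R -> Y -> C) (m : nat)
    (phi0 mu : 'cV[R]_n) : R :=
  vnorm2 (map_mx toC (mu *m mu^T *m phi0))
  + \sum_(s : m.-tuple Y | has (fun y => out y != 0) s)
      vnorm2 (run_seq W theta amp s
                (map_mx toC ((1%:M - mu *m mu^T) *m phi0))).

End QuantumDefs.

(* Main.v *)
Require Import Defs.
From mathcomp Require Import all_boot all_order all_algebra complex.
From mathcomp Require Import all_classical all_reals all_analysis.
From mathcomp Require Import ring lra.
Import Order.TTheory GRing.Theory Num.Theory.
Local Open Scope ring_scope.
Set Implicit Arguments. Unset Strict Implicit.

Section Helpers.
Variable R : realType.
Local Notation C := (R[i]).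

Lemma nsqE (z : C) : conjc z * z = toC (nsq z).
Proof. case: z => a b; rewrite /toC /nsq /=; simpc; congr Complex; ring. Qed.
Lemma nsqM (x y : C) : nsq (x * y) = nsq x * nsq y.
Proof. case: x => a b; case: y => c d; rewrite /nsq /=; ring. Qed.
Lemma nsq_ge0 (z : C) : 0 <= nsq z.
Proof. by rewrite /nsq addr_ge0 // sqr_ge0. Qed.
Lemma nsq0 : nsq (0 : C) = 0. Proof. by rewrite /nsq /= expr0n /= addr0. Qed.
Lemma nsq_eq0 (z : C) : nsq z = 0 -> z = 0.
Proof.
case: z => a b; rewrite /nsq /= => /eqP; rewrite paddr_eq0 ?sqr_ge0 //.
by case/andP; rewrite !sqrf_eq0 => /eqP -> /eqP ->.
Qed.
Lemma toCE : @toC R = real_complex R. Proof. by []. Qed.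
Lemma toC_sum (I : Type) (r : seq I) (F : I -> R) :
  toC (\sum_(i <- r) F i) = \sum_(i <- r) toC (F i).
Proof. by rewrite toCE raddf_sum. Qed.
Lemma toC_inj : injective (@toC R). Proof. by move=> x y []. Qed.

Lemma adjE m n (A : 'M[C]_(m, n)) : adj A = (map_mx conjc A)^T.
Proof. by congr trmx; apply/matrixP => i j; rewrite !mxE; case: (A i j). Qed.
Lemma adjM m n p (A : 'M[C]_(m, n)) (B : 'M[C]_(n, p)) : adj (A *m B) = adj B *m adj A.
Proof. by rewrite !adjE map_mxM trmx_mul. Qed.
Lemma adj_toC m n (A : 'M[R]_(m, n)) : adj (map_mx (@toC R) A) = map_mx (@toC R) A^T.
Proof. by apply/matrixP => i j; rewrite !mxE /cconj /toC /= oppr0. Qed.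
Lemma map_toCM m n p (A : 'M[R]_(m, n)) (B : 'M[R]_(n, p)) :
  map_mx (@toC R) (A *m B) = map_mx (@toC R) A *m map_mx (@toC R) B.
Proof. by rewrite toCE map_mxM. Qed.

Lemma vnorm2E n (v : 'cV[C]_n) : toC (vnorm2 v) = (adj v *m v) 0 0.
Proof.
rewrite /vnorm2 toC_sum mxE; apply: eq_bigr => i _.
by rewrite -nsqE adjE !mxE.
Qed.
Lemma vnorm2_unitary n (W : 'M[C]_n) (v : 'cV[C]_n) :
  adj W *m W = 1%:M -> vnorm2 (W *m v) = vnorm2 v.
Proof. by move=> HW; apply: toC_inj; rewrite !vnorm2E adjM -mulmxA (mulmxA (adj W)) HW mul1mx. Qed.
Lemma vnorm2_toC n (x : 'cV[R]_n) : vnorm2 (map_mx (@toC R) x) = (x^T *m x) 0 0.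
Proof. by rewrite /vnorm2 mxE; apply: eq_bigr => i _; rewrite !mxE /nsq /= expr2 expr0n /= addr0. Qed.
Lemma vnorm2_col n (d b : 'I_n -> C) :
  vnorm2 (\col_k (d k * b k)) = \sum_k nsq (d k) * nsq (b k).
Proof. by apply: eq_bigr => k _; rewrite mxE nsqM. Qed.

Lemma nsq_prod (I : Type) (r : seq I) (F : I -> C) :
  nsq (\prod_(i <- r) F i) = \prod_(i <- r) nsq (F i).
Proof.
elim: r => [|a r IH]; rewrite ?big_nil ?big_cons.
  by rewrite /nsq /= expr1n expr0n /= addr0.
by rewrite nsqM IH.
Qed.

Lemma sum_tuple_prod (Y : finType) (f : Y -> R) m :
  \sum_(s : m.-tuple Y) \prod_(y <- s) f y = (\sum_y f y) ^+ m.
Proof.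
elim: m => [|m IH].
  rewrite expr0 (big_pred1 [tuple]) ?big_nil // => s /=.
  by symmetry; apply/eqP; apply: tuple0.
rewrite exprS -IH big_distrl /=.
transitivity (\sum_(p : Y * m.-tuple Y) f p.1 * \prod_(y <- p.2) f y).
  rewrite (reindex (fun p : Y * m.-tuple Y => cons_tuple p.1 p.2)) /=.
    by apply: eq_bigr => p _; rewrite big_cons.
  apply: onW_bij; exists (fun t => (thead t, behead_tuple t)).
    by case=> y t /=; rewrite theadE; congr pair; apply: val_inj.
  by move=> t /=; apply: val_inj => /=; rewrite [in RHS](tuple_eta t).
under [in RHS]eq_bigr do rewrite big_distrr.
by rewrite pair_big /=.
Qed.

Lemma run_seqE n (W : 'M[C]_n) (theta : 'I_n -> R) (Y : finType)
    (amp : R -> Y -> C) (s : seq Y) (b : 'cV[C]_n) :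
  adj W *m W = 1%:M ->
  run_seq W theta amp s (W *m b) =
    W *m \col_k ((\prod_(y <- s) amp (theta k) y) * b k 0).
Proof.
move=> HW; elim: s b => [|y s IH] b /=.
  by congr (_ *m _); apply/matrixP => i j; rewrite !mxE big_nil mul1r ord1.
rewrite /run_seq /= -/(run_seq _ _ _ _ _).
have -> : kraus W theta amp y *m (W *m b) = W *m (\col_k (amp (theta k) y * b k 0)).
  rewrite /kraus -!mulmxA (mulmxA (adj W)) HW mul1mx.
  by congr (_ *m _); apply/matrixP => i j; rewrite mul_diag_mx !mxE ord1.
rewrite IH; congr (_ *m _); apply/matrixP => i j; rewrite !mxE big_cons; ring.
Qed.
Lemma sum_has (Y : finType) (out : Y -> R) (f : Y -> R) m :
  \sum_(s : m.-tuple Y | has (fun y => out y != 0) s) \prod_(y <- s) f y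
  = (\sum_y f y)^+m - (\sum_(y | out y == 0) f y)^+m.
Proof.
have H (s : seq Y) : \prod_(y <- s) (if out y == 0 then f y else 0) =
   if has (fun y => out y != 0) s then 0 else \prod_(y <- s) f y.
  elim: s => [|y s IH]; rewrite ?big_nil ?big_cons //= IH.
  by case: eqP => /= _; case: has => //=; rewrite ?mul0r ?mulr0.
have E : \sum_(s : m.-tuple Y | ~~ has (fun y => out y != 0) s) \prod_(y <- s) f y
   = (\sum_(y | out y == 0) f y)^+m.
  rewrite (big_mkcond (fun y => out y == 0)) -sum_tuple_prod [LHS]big_mkcond /=.
  by apply: eq_bigr => s _; rewrite H; case: has.
rewrite -E -sum_tuple_prod (bigID (fun s : m.-tuple Y => has (fun y => out y != 0) s) xpredT) /=.
by rewrite addrK.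
Qed.

Lemma theta0 (t : R) : - pi < t <= pi -> cos t = 1 -> t = 0.
Proof.
move=> /andP[h1 h2] hc.
have ht : `|t| \in `[0, pi] by rewrite in_itv /= normr_ge0 /= ler_norml h2 ltW.
have h0 : (0 : R) \in `[0, pi] by rewrite in_itv /= lexx pi_ge0.
have : cos `|t| = cos 0.
  by rewrite cos0; case: (ler0P t) => _; rewrite ?cosN.
by move/(cos_inj ht h0)/eqP; rewrite normr_eq0 => /eqP.
Qed.

Lemma expi_eq1 (t : R) : - pi < t <= pi -> expi t = 1 -> t = 0.
Proof. by move=> ht [hc _]; exact: theta0. Qed.

Lemma mx11E (A : 'M[R]_1) : A = (A 0 0)%:M.
Proof. by apply/matrixP => i j; rewrite !ord1 !mxE. Qed.

Lemma U1_apply n (mu v : 'cV[R]_n) : U1 mu *m v = v - 2 *: (mu *m (mu^T *m v)).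
Proof. by rewrite /U1 mulmxBl mul1mx -scalemxAl mulmxA. Qed.

Lemma nofix n (U2 : 'M[R]_n) (phi0 mu v : 'cV[R]_n) :
  U2^T *m U2 = 1%:M -> U2 *m phi0 = phi0 ->
  (forall v : 'cV[R]_n, U2 *m v = v -> exists a : R, v = a *: phi0) ->
  (mu^T *m phi0) 0 0 != 0 -> U2 *m U1 mu *m v = v -> v = 0.
Proof.
move=> HU Hphi Huniq Hr Hv.
have HT : phi0^T *m U2 = phi0^T.
  have H : U2^T *m phi0 = phi0 by rewrite -{1}Hphi mulmxA HU mul1mx.
  by rewrite -[U2]trmxK -trmx_mul H.
have Hs : mu^T *m v = 0.
  have : phi0^T *m v = phi0^T *m v - 2 *: (phi0^T *m mu *m (mu^T *m v)).
    by rewrite -{1}Hv -mulmxA mulmxA HT U1_apply mulmxBr -scalemxAr !mulmxA.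
  move/eqP; rewrite -subr_eq0 opprB addrC subrK scaler_eq0 pnatr_eq0 /= => /eqP H.
  have : (phi0^T *m mu *m (mu^T *m v)) 0 0 = 0 by rewrite H mxE.
  rewrite [phi0^T *m mu]mx11E mul_scalar_mx mxE.
  have -> : (phi0^T *m mu) 0 0 = (mu^T *m phi0) 0 0.
    by rewrite !mxE; apply: eq_bigr => i _; rewrite !mxE mulrC.
  move/eqP; rewrite mulf_eq0 (negbTE Hr) /= => /eqP H2.
  by apply/matrixP => i j; rewrite !ord1 H2 mxE.
have : U2 *m v = v by rewrite -{2}Hv -mulmxA U1_apply Hs mulmx0 scaler0 subr0.
case/Huniq => a Ha.
have : (mu^T *m v) 0 0 = 0 by rewrite Hs mxE.
rewrite Ha -scalemxAr mxE => /eqP; rewrite mulf_eq0 (negbTE Hr) orbF => /eqP ->.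
by rewrite scale0r.
Qed.
Lemma ReD (x y : C) : complex.Re (x + y) = complex.Re x + complex.Re y. Proof. by case: x => ? ?; case: y => ? ? /=. Qed.
Lemma ImD (x y : C) : complex.Im (x + y) = complex.Im x + complex.Im y. Proof. by case: x => ? ?; case: y => ? ? /=. Qed.
Lemma ReS (I : Type) (r : seq I) (F : I -> C) : complex.Re (\sum_(i <- r) F i) = \sum_(i <- r) complex.Re (F i).
Proof. elim: r => [|a r IH]; rewrite ?big_nil ?big_cons //= ReD IH //. Qed.
Lemma ImS (I : Type) (r : seq I) (F : I -> C) : complex.Im (\sum_(i <- r) F i) = \sum_(i <- r) complex.Im (F i).
Proof. elim: r => [|a r IH]; rewrite ?big_nil ?big_cons //= ImD IH //. Qed.

Lemma eig_supp n (W : 'M[C]_n) (theta : 'I_n -> R) (Uc : 'M[C]_n) (psi : 'cV[C]_n) k :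
  adj W *m W = 1%:M -> Uc *m W = W *m diag_mx (\row_k expi (theta k)) ->
  Uc *m psi = psi -> - pi < theta k <= pi -> (adj W *m psi) k 0 != 0 -> theta k = 0.
Proof.
move=> HW HE Hpsi ht Ha.
have HW' : W *m adj W = 1%:M := mulmx1C HW.
have E : adj W *m Uc = diag_mx (\row_k expi (theta k)) *m adj W.
  by rewrite -[adj W *m Uc]mulmx1 -HW' mulmxA -(mulmxA (adj W)) HE mulmxA HW mul1mx.
set a := adj W *m psi in Ha *.
have : (diag_mx (\row_k expi (theta k)) *m a) k 0 = a k 0 by rewrite /a mulmxA -E -mulmxA Hpsi.
rewrite mul_diag_mx !mxE => /eqP; rewrite -subr_eq0 -[X in _ - X == 0]mul1r -mulrBl mulf_eq0.
case/orP => [|H]; first by rewrite subr_eq0 => /eqP; exact: expi_eq1.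
by move: Ha; rewrite /a mxE H.
Qed.

Lemma no_theta0 n (U : 'M[R]_n) (W : 'M[C]_n) (theta : 'I_n -> R) k :
  adj W *m W = 1%:M -> map_mx (@toC R) U *m W = W *m diag_mx (\row_k expi (theta k)) ->
  (forall v : 'cV[R]_n, U *m v = v -> v = 0) -> theta k != 0.
Proof.
move=> HW HE Hfix; apply/eqP => Hk.
have Hcol i : \sum_j toC (U i j) * W j k = W i k.
  have := congr1 (fun M : 'M[C]_n => M i k) HE; rewrite /= mul_mx_diag !mxE Hk /expi cos0 sin0.
  have -> : Complex 1 0 = 1 :> C by [].
  rewrite mulr1 => <-; by apply: eq_bigr => j _; rewrite mxE.
have Hre : U *m (\col_i complex.Re (W i k)) = \col_i complex.Re (W i k).
  apply/matrixP => i j; rewrite !mxE -(Hcol i) ReS; apply: eq_bigr => l _; rewrite !mxE.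
  by case: (W l k) => a b; rewrite /toC /=; ring.
have Him : U *m (\col_i complex.Im (W i k)) = \col_i complex.Im (W i k).
  apply/matrixP => i j; rewrite !mxE -(Hcol i) ImS; apply: eq_bigr => l _; rewrite !mxE.
  by case: (W l k) => a b; rewrite /toC /=; ring.
have H0 j : W j k = 0.
  have := congr1 (fun M : 'cV[R]_n => M j 0) (Hfix _ Hre); have := congr1 (fun M : 'cV[R]_n => M j 0) (Hfix _ Him).
  rewrite !mxE; case: (W j k) => a b /= -> ->; by [].
have := congr1 (fun M : 'M[C]_n => M k k) HW; rewrite !mxE eqxx /=.
under eq_bigr do rewrite !mxE H0 mulr0.
by rewrite big1 // => /eqP; rewrite eq_sym oner_eq0.
Qed.

Lemma qht_bound n (W : 'M[C]_n) (theta : 'I_n -> R) (phi0 mu : 'cV[R]_n) (eps T : R) :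
  (forall k, theta k != 0) -> (forall k, 0 <= weight W phi0 mu k) -> 0 < eps < 1 ->
  QHT W theta phi0 mu eps <= T ->
  \sum_k weight W phi0 mu k * (if T < `|theta k|^-1 then 1 else 0) <= eps.
Proof.
move=> Hth Hw /andP[Heps0 Heps] HT.
set w := weight W phi0 mu.
have Esum (F : 'I_n -> R) : \sum_(k | theta k != 0) F k = \sum_k F k.
  by apply: eq_bigl => k; rewrite Hth.
set S := [set y | PrQH_gt W theta phi0 mu y <= eps]%classic.
have Sne : (S !=set0)%classic.
  exists (\sum_k `|theta k|^-1); rewrite /S /= /PrQH_gt.
  have h0 : 0 <= \sum_k `|theta k|^-1 by apply: sumr_ge0 => k _; rewrite invr_ge0.
  have hk j : `|theta j|^-1 <= \sum_k `|theta k|^-1.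
    rewrite (bigD1 j) //= lerDl; apply: sumr_ge0 => k _; rewrite invr_ge0 //.
  rewrite ltNge h0 /= mulr0 addr0 big1 ?ltW // => k _.
  by rewrite ltNge hk /= mulr0.
set M := \big[Order.min/T+1]_(k | T < `|theta k|^-1) `|theta k|^-1.
have TM : T < M by apply: lt_bigmin => [|k //]; rewrite ltrDl ltr01.
have [y Sy yM] := inf_lt Sne (le_lt_trans HT TM).
move: Sy; rewrite /S /= /PrQH_gt Esum Esum.
have [yneg|ypos] := ltP y 0.
  rewrite mulr1 => H.
  have E2 : \sum_k weight W phi0 mu k * (if y < `|theta k|^-1 then 1 else 0)
          = \sum_k weight W phi0 mu k.
    by apply: eq_bigr => k _; rewrite (lt_le_trans yneg) ?invr_ge0 // mulr1.
  by move: H; rewrite E2 addrC subrK => /(lt_le_trans Heps); rewrite ltxx.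
rewrite mulr0 addr0 => H; apply: le_trans H; apply: ler_sum => k _.
case: ifP => hT; last by rewrite mulr0; case: ifP; rewrite ?mulr1 ?mulr0.
have : M <= `|theta k|^-1 by apply: bigmin_le_cond.
by move/(lt_le_trans yM) => ->.
Qed.

Lemma phitildeE n (phi0 mu : 'cV[R]_n) : phitilde phi0 mu = (1%:M - mu *m mu^T) *m phi0.
Proof.
rewrite /phitilde mulmxBl mul1mx -mulmxA.
have -> : mu^T *m phi0 = (rdot mu phi0)%:M by apply/matrixP => i j; rewrite !ord1 [in RHS]mxE eqxx mulr1n.
by rewrite mul_mx_scalar.
Qed.

Lemma tr11 (A : 'M[R]_1) : A^T 0 0 = A 0 0. Proof. by rewrite mxE. Qed.

Lemma split_norm n (phi0 mu : 'cV[R]_n) :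
  mu^T *m mu = 1%:M -> phi0^T *m phi0 = 1%:M ->
  ((mu *m mu^T *m phi0)^T *m (mu *m mu^T *m phi0)) 0 0 +
  (((1%:M - mu *m mu^T) *m phi0)^T *m ((1%:M - mu *m mu^T) *m phi0)) 0 0 = 1.
Proof.
move=> Hmu Hphi.
set x := mu *m mu^T *m phi0.
have Hxx : x^T *m x = x^T *m phi0.
  rewrite /x !trmx_mul trmxK -!mulmxA; congr (_ *m _); congr (_ *m _).
  by rewrite !mulmxA Hmu mul1mx.
have Hpx : phi0^T *m x = x^T *m phi0.
  by apply/matrixP => i j; rewrite !ord1 -tr11 trmx_mul trmxK.
rewrite mulmxBl mul1mx -/x.
rewrite (linearB trmx) mulmxBl !mulmxBr Hphi Hxx Hpx subrr subr0.
set B := x^T *m phi0.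
rewrite !mxE eqxx mulr1n; set s := \sum_j _; ring.
Qed.
Lemma ln3_gt0 : 0 < ln (3 : R). Proof. by apply: ln_gt0; rewrite ltr1n. Qed.
Lemma q_le_eps (eps : R) (m : nat) : 0 < eps -> (ln 3)^-1 * ln eps^-1 <= m%:R -> (3^-1)^+m <= eps.
Proof.
move=> he; rewrite ler_pdivrMl ?ln3_gt0 // mulrC mulr_natl -lnXn // => hm.
have h3 : (0 : R) < 3 ^+ m by rewrite exprn_gt0.
move: hm; rewrite ler_ln ?posrE ?invr_gt0 // => hm.
by rewrite exprVn invf_ple ?posrE.
Qed.

Lemma p_le (Y : finType) (out : Y -> R) (f : Y -> R) (P : pred Y) :
  (forall y, 0 <= f y) -> (forall y, out y == 0 -> P y) ->
  \sum_(y | out y == 0) f y <= \sum_(y | P y) f y.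
Proof.
move=> hf hP; rewrite [X in _ <= X]big_mkcond [X in X <= _]big_mkcond /=.
apply: ler_sum => y _; case: ifP => h; first by rewrite hP.
by case: ifP.
Qed.
Lemma rdotC n (u v : 'cV[R]_n) : rdot u v = rdot v u.
Proof. by rewrite /rdot !mxE; apply: eq_bigr => i _; rewrite !mxE mulrC. Qed.
End Helpers.

Unset Implicit Arguments. Set Strict Implicit.

Theorem corollary1 (R : realType) :
  exists c Cst : R, 0 < c /\ 0 < Cst /\
  forall (n : nat) (U2 : 'M[R]_n) (phi0 mu : 'cV[R]_n),
    U2^T *m U2 = 1%:M -> U2 *m U2^T = 1%:M ->
    phi0^T *m phi0 = 1%:M -> U2 *m phi0 = phi0 ->
    (forall v : 'cV[R]_n, U2 *m v = v -> exists a : R, v = a *: phi0) ->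
    mu^T *m mu = 1%:M ->
    forall (W : 'M[R[i]]_n) (theta : 'I_n -> R),
      adj W *m W = 1%:M ->
      map_mx (@toC R) (U2 *m U1 mu) *m W = W *m diag_mx (\row_k expi (theta k)) ->
      (forall k, - pi < theta k <= pi) ->
    forall eps T : R, 0 < eps < 1 ->
      Num.max 1 (QHT W theta phi0 mu eps) <= T ->
    forall (Y : finType) (out : Y -> R) (amp : R -> Y -> R[i]),
      is_estimator out amp T^-1 ->
    forall m : nat, c * ln eps^-1 <= m%:R ->
      (rdot phi0 mu != 0 ->
         1 - Cst * eps <= mainDetect_accept W theta out amp m phi0 mu) /\
      (rdot phi0 mu = 0 ->
         mainDetect_accept W theta out amp m phi0 mu = 0).
Proof.
exists (ln (3:R))^-1, 2; split; first by rewrite invr_gt0 ln3_gt0.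
split; first by rewrite ltr0n.
move=> n U2 phi0 mu HU2a HU2b Hphi1 Hphi Huniq Hmu W theta HW HE Hth.
move=> eps T /andP[Heps0 Heps1] HT Y out amp Hest m Hm.
have HW' : W *m adj W = 1%:M := mulmx1C HW.
set P := 1%:M - mu *m mu^T.
set psi := map_mx (@toC R) (P *m phi0).
set a := adj W *m psi.
have Hpsi : psi = W *m a by rewrite /a mulmxA HW' mul1mx.
have Hwt k : weight W phi0 mu k = nsq (a k 0) by rewrite /weight phitildeE.
have [Hrng [Hsum1 Hzero]] := Hest.
pose f k y := nsq (amp (theta k) y).
pose p k := \sum_(y | out y == 0) f k y.
have Hf1 k : \sum_y f k y = 1 by case: (Hsum1 _ (Hth k)).
have Hacc : mainDetect_accept W theta out amp m phi0 mu =
   vnorm2 (map_mx (@toC R) (mu *m mu^T *m phi0)) + \sum_k nsq (a k 0) * (1 - p k ^+ m).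
  rewrite /mainDetect_accept -/P -/psi; congr (_ + _).
  under eq_bigr => s _ do rewrite Hpsi run_seqE // vnorm2_unitary // vnorm2_col.
  under eq_bigr => s _ do under eq_bigr => k _ do rewrite nsq_prod.
  rewrite exchange_big /=; apply: eq_bigr => k _.
  have H : \sum_(s : m.-tuple Y | has (fun y => out y != 0) s) \prod_(y <- s) f k y = 1 - p k ^+ m.
    by rewrite sum_has Hf1 expr1n.
  by rewrite -big_distrl /= mulrC H.
split=> Hr; last first.
  have Hmuphi : mu^T *m phi0 = 0.
    apply/matrixP => i j; rewrite !ord1 [in RHS]mxE.
    by rewrite -/(rdot mu phi0) rdotC.
  rewrite Hacc.
  have -> : mu *m mu^T *m phi0 = 0 by rewrite -mulmxA Hmuphi mulmx0.
  rewrite vnorm2_toC mulmx0 mxE add0r.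
  apply: big1 => k _.
  have [Ha0|Ha] := eqVneq (a k 0) 0; first by rewrite Ha0 nsq0 mul0r.
  have Hpf : map_mx (@toC R) (U2 *m U1 mu) *m psi = psi.
    rewrite /psi -map_toCM; congr map_mx.
    have Hp : (1%:M - mu *m mu^T) *m phi0 = phi0.
      by rewrite mulmxBl mul1mx -(mulmxA mu) Hmuphi mulmx0 subr0.
    by rewrite /P Hp -mulmxA U1_apply Hmuphi mulmx0 scaler0 subr0 Hphi.
  have Hk0 := eig_supp HW HE Hpf (Hth k) Ha.
  have -> : p k = 1 by rewrite /p /f Hk0 Hzero.
  by rewrite expr1n subrr mulr0.
have Hr' : (mu^T *m phi0) 0 0 != 0 by rewrite -/(rdot mu phi0) rdotC.
have Hfix (v : 'cV[R]_n) : U2 *m U1 mu *m v = v -> v = 0 := nofix HU2a Hphi Huniq Hr'.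
have Hth0 k : theta k != 0 := no_theta0 k HW HE Hfix.
have Hw0 k : 0 <= weight W phi0 mu k by exact: nsq_ge0.
have HX : 0 <= vnorm2 (map_mx (@toC R) (mu *m mu^T *m phi0)).
  by apply: sumr_ge0 => i _; exact: nsq_ge0.
have Htot : vnorm2 (map_mx (@toC R) (mu *m mu^T *m phi0)) + \sum_k nsq (a k 0) = 1.
  have -> : \sum_k nsq (a k 0) = vnorm2 psi by rewrite Hpsi vnorm2_unitary.
  by rewrite /psi !vnorm2_toC; exact: split_norm.
rewrite Hacc.
have -> : vnorm2 (map_mx (@toC R) (mu *m mu^T *m phi0)) + \sum_k nsq (a k 0) * (1 - p k ^+ m)
    = 1 - \sum_k nsq (a k 0) * p k ^+ m.
  under eq_bigr do rewrite mulrBr mulr1.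
  by rewrite sumrB addrA -[X in _ = X - _]Htot.
rewrite lerD2l lerN2.
move: HT; rewrite ge_max => /andP[HT1 HTq].
have HT0 : 0 < T by apply: lt_le_trans HT1; rewrite ltr01.
pose q : R := (3^-1)^+m.
have Hq : q <= eps := q_le_eps Heps0 Hm.
have Hq0 : 0 <= q by rewrite exprn_ge0 // invr_ge0.
have Hsumw : \sum_k nsq (a k 0) <= 1 by rewrite -Htot lerDr.
have HQ := qht_bound Hth0 Hw0 (introT andP (conj Heps0 Heps1)) HTq.
have HQ' : \sum_k nsq (a k 0) * (if T < `|theta k|^-1 then 1 else 0) <= eps.
  by apply: le_trans HQ; apply: ler_sum => k _; rewrite Hwt.
apply: (@le_trans _ _ (\sum_k (nsq (a k 0) * (if T < `|theta k|^-1 then 1 else 0) + nsq (a k 0) * q))).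
  apply: ler_sum => k _.
  have f0 y : 0 <= f k y by exact: nsq_ge0.
  have p0 : 0 <= p k by apply: sumr_ge0 => y _.
  have p1 : p k <= 1 by rewrite -(Hf1 k); apply: p_le.
  have w0 : 0 <= nsq (a k 0) := nsq_ge0 _.
  case: ifP => hT.
    rewrite mulr1; apply: (@le_trans _ _ (nsq (a k 0))).
      by rewrite ler_piMr // exprn_ile1.
    by rewrite lerDl mulr_ge0.
  rewrite mulr0 add0r; apply: ler_wpM2l => //.
  have hth : T^-1 <= `|theta k|.
    have hpos : 0 < `|theta k| by rewrite normr_gt0.
    by rewrite -invf_ple ?posrE // leNgt hT.
  have hp3 : p k <= 3^-1.
    apply: le_trans (proj2 (Hsum1 _ (Hth k))).
    apply: p_le => // y /eqP hy.
    rewrite hy /cdist sub0r normrN le_min hth /=.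
    have h1 : T^-1 <= 1 by rewrite invf_le1.
    have h2 : `|theta k| <= pi by rewrite ler_norml; case/andP: (Hth k) => /ltW -> ->.
    have h3 := pi_ge2 R.
    lra.
  by apply: lerXn2r; rewrite ?nnegrE ?invr_ge0.
rewrite big_split /= -big_distrl /=.
rewrite mulr_natl mulr2n; apply: lerD => //.
apply: le_trans Hq; by rewrite ler_piMl.
Qed.
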